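(* Let $\alpha,\alpha'$ be probability distributions on $[d]$, $n\ge1$, $\lambda\sim\mathrm{SW}^n(\alpha)$, $\lambda'\sim\mathrm{SW}^n(\alpha')$, and $\underline\lambda=\lambda/n$, $\underline\lambda'=\lambda'/n$. Then for every $k\in[d]$, \[ \big|\mathbb E[\underline\lambda_1+\cdots+\underline\lambda_k]-\mathbb E[\underline\lambda'_1+\cdots+\underline\lambda'_k]\big|\le d_{TV}(\alpha,\alpha'),\qquad \big|\mathbb E[\underline\lambda_k]-\mathbb E[\underline\lambda'_k]\big|\le 2\,d_{TV}(\alpha,\alpha'). \]
   Context: $d_{TV}(\alpha,\alpha')=\tfrac12\sum_i|\alpha_i-\alpha'_i|$. $\mathrm{SW}^n(\alpha)$ is the law of the RSK shape $\mathrm{shRSK}(\boldsymbol w)$ (Young diagram whose first $k$ rows sum to the maximum total length of $k$ disjoint weakly increasing subsequences of $\boldsymbol w$), where $\boldsymbol w\in[d]^n$ has i.i.d. letters with law $\alpha$. *)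

(* Defs.v *)
From HB Require Import structures.
From mathcomp Require Import all_boot all_order all_algebra.
Set Implicit Arguments. Unset Strict Implicit. Unset Printing Implicit Defensive.
Import Order.TTheory GRing.Theory Num.Theory.

(* Words w in [d]^n are n-tuples of letters in 'I_d (letter j : 'I_d stands for j+1). *)

Definition weakly_incr (d n : nat) (w : n.-tuple 'I_d) (S : {set 'I_n}) : bool :=
  [forall i in S, forall j in S, (i < j)%N ==> (tnth w i <= tnth w j)%N].

Definition disj_incr_family (d n k : nat) (w : n.-tuple 'I_d)
  (F : {ffun 'I_k -> {set 'I_n}}) : bool :=
  [forall i, weakly_incr w (F i)] &&
  [forall i, forall j, (i != j) ==> [disjoint F i & F j]].

(* greene k w = maximum total length of k disjoint weakly increasing
   subsequences of w (= lambda_1 + ... + lambda_k for lambda = shRSK w). *)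
Definition greene (d n k : nat) (w : n.-tuple 'I_d) : nat :=
  \max_(F : {ffun 'I_k -> {set 'I_n}} | disj_incr_family w F) \sum_(i < k) #|F i|.

(* j-th row (1-indexed) of the RSK shape: lambda_j = greene j - greene (j-1). *)
Definition shRSK_row (d n j : nat) (w : n.-tuple 'I_d) : nat :=
  (greene j w - greene j.-1 w)%N.

Local Open Scope ring_scope.

Definition is_distr (R : realFieldType) (d : nat) (alpha : 'I_d -> R) : Prop :=
  (forall i, 0 <= alpha i) /\ \sum_(i < d) alpha i = 1.

Definition Ew (R : realFieldType) (d n : nat) (alpha : 'I_d -> R)
  (f : n.-tuple 'I_d -> R) : R :=
  \sum_(w : n.-tuple 'I_d) (\prod_(i < n) alpha (tnth w i)) * f w.

Definition dTV (R : realFieldType) (d : nat) (alpha alpha' : 'I_d -> R) : R :=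
  2^-1 * \sum_(i < d) `|alpha i - alpha' i|.

(* Main.v *)
Require Import Defs.
From HB Require Import structures.
From mathcomp Require Import all_boot all_order all_algebra.
From mathcomp Require Import lra.
Import Order.TTheory GRing.Theory Num.Theory.
Local Open Scope ring_scope.
Set Implicit Arguments.

Lemma pw (R : realFieldType) (x h : R) : 0 <= h -> h <= 1 ->
  - ((`|x| - x) / 2) <= x * h <= (`|x| + x) / 2.
Proof.
move=> h0 h1; case: (lerP 0 x) => hx; [rewrite ger0_norm // | rewrite ltr0_norm //];
  apply/andP; split; nra.
Qed.

Lemma scal (R : realFieldType) d (al al' : 'I_d -> R) (Ha : is_distr al) (Ha' : is_distr al')
  (g : 'I_d -> R) (Hg : forall a b, g a - g b <= 1) :
  `|\sum_a (al a - al' a) * g a| <= dTV al al'.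
Proof.
have dTV0 : 0 <= dTV al al'.
  by rewrite /dTV mulr_ge0 ?invr_ge0 ?ler0n // sumr_ge0.
case: (boolP [exists a : 'I_d, true]) => [/existsP [a0 _]|/existsPn H]; last first.
  by rewrite big1 ?normr0 // => a; have := H a.
pose m := g [arg min_(i < a0) g i]%O.
have Hm : forall a, m <= g a.
  move=> a; rewrite /m; case: (@real_arg_minP R _ a0 predT g isT) => //.
    by move=> i _; exact: num_real.
  by move=> i _ Hi; apply: Hi.
have Hs : \sum_a (al a - al' a) = 0 by rewrite sumrB Ha.2 Ha'.2 subrr.
have -> : \sum_a (al a - al' a) * g a = \sum_a (al a - al' a) * (g a - m).
  rewrite [RHS](eq_bigr (fun a => (al a - al' a) * g a - (al a - al' a) * m)); last first.
    by move=> a _; rewrite mulrBr.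
  by rewrite sumrB -big_distrl /= Hs mul0r subr0.
have E1 : \sum_a (`|al a - al' a| + (al a - al' a))/2 = dTV al al'.
  by rewrite -big_distrl /= big_split /= Hs addr0 /dTV mulrC.
have E2 : \sum_a (`|al a - al' a| - (al a - al' a))/2 = dTV al al'.
  by rewrite -big_distrl /= sumrB Hs subr0 /dTV mulrC.
have Hp a := @pw R (al a - al' a) (g a - m) (ltac:(by rewrite subr_ge0)) (Hg a [arg min_(i < a0) g i]%O).
rewrite ler_norml; apply/andP; split.
  rewrite -E2 -sumrN; apply: ler_sum => a _; by case/andP: (Hp a).
rewrite -E1; apply: ler_sum => a _; by case/andP: (Hp a).
Qed.

Section Ana.
Variable R : realFieldType.
Variable d : nat.

Definition ctup n (a : 'I_d) (t : n.-tuple 'I_d) : n.+1.-tuple 'I_d := [tuple of a :: t].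

Lemma tnth_ctup0 n a (t : n.-tuple 'I_d) : tnth (ctup a t) ord0 = a.
Proof. by []. Qed.

Lemma tnth_ctupS n a (t : n.-tuple 'I_d) i : tnth (ctup a t) (lift ord0 i) = tnth t i.
Proof. by rewrite !(tnth_nth a). Qed.

Lemma Ew_cons (al : 'I_d -> R) n (f : n.+1.-tuple 'I_d -> R) :
  Ew al f = \sum_a al a * Ew al (fun t : n.-tuple 'I_d => f (ctup a t)).
Proof.
rewrite /Ew [RHS](eq_bigr _ (fun a _ => big_distrr _ _ _)) /=.
rewrite pair_big /=.
rewrite (reindex (fun p : 'I_d * n.-tuple 'I_d => ctup p.1 p.2)) /=.
  apply: eq_bigr => -[a t] _ /=.
  rewrite big_ord_recl tnth_ctup0 -mulrA; congr (_ * (_ * _)); apply: eq_bigr => i _; congr al; by rewrite !(tnth_nth a).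
exists (fun w : n.+1.-tuple 'I_d => (thead w, [tuple of behead w])).
  by move=> [a t] _ /=; congr pair; apply: val_inj.
by move=> w _; rewrite /ctup -tuple_eta.
Qed.

Lemma Ew_const (al : 'I_d -> R) (Ha : is_distr al) n c :
  Ew al (fun _ : n.-tuple 'I_d => c) = c.
Proof.
elim: n => [|n IH].
  rewrite /Ew (big_pred1 [tuple]) ?big_ord0 ?mul1r // => t.
  apply/esym/eqP/val_inj; by case: t => -[].
rewrite Ew_cons; under eq_bigr => a _ do rewrite IH.
by rewrite -big_distrl /= Ha.2 mul1r.
Qed.

Lemma Ew0 (al : 'I_d -> R) (f : 0.-tuple 'I_d -> R) : Ew al f = f [tuple].
Proof.
rewrite /Ew (big_pred1 [tuple]) ?big_ord0 ?mul1r // => t.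
apply/esym/eqP/val_inj; by case: t => -[].
Qed.

Lemma Ew_le (al : 'I_d -> R) (Ha : is_distr al) n (f g : n.-tuple 'I_d -> R) :
  (forall w, f w <= g w) -> Ew al f <= Ew al g.
Proof.
move=> H; apply: ler_sum => w _; apply: ler_wpM2l => //.
by apply: prodr_ge0 => i _; apply: Ha.1.
Qed.

Lemma Ew_sub (al : 'I_d -> R) n (f g : n.-tuple 'I_d -> R) :
  Ew al f - Ew al g = Ew al (fun w => f w - g w).
Proof. by rewrite /Ew -sumrB; apply: eq_bigr => w _; rewrite mulrBr. Qed.

Definition Lip1 n (f : n.-tuple 'I_d -> R) := forall (w w' : n.-tuple 'I_d) (p : 'I_n),
  (forall i, i != p -> tnth w i = tnth w' i) -> f w - f w' <= 1.

Lemma Ew_lip (al al' : 'I_d -> R) (Ha : is_distr al) (Ha' : is_distr al') n :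
  forall f : n.-tuple 'I_d -> R, Lip1 f -> `|Ew al f - Ew al' f| <= n%:R * dTV al al'.
Proof.
elim: n => [|n IH] f Hf.
  by rewrite !Ew0 subrr normr0 mul0r.
rewrite !Ew_cons.
set F := fun a => Ew al (fun t : n.-tuple 'I_d => f (ctup a t)).
set G := fun a => Ew al' (fun t : n.-tuple 'I_d => f (ctup a t)).
have -> : \sum_a al a * F a - \sum_a al' a * G a =
   \sum_a al a * (F a - G a) + \sum_a (al a - al' a) * G a.
  rewrite -big_split -sumrB /=; apply: eq_bigr => a _; rewrite mulrBr mulrBl; lra.
have Lipa a : Lip1 (fun t : n.-tuple 'I_d => f (ctup a t)).
  move=> w w' p Hp; apply: (Hf _ _ (lift ord0 p)) => i.
  case: (unliftP ord0 i) => [j ->|->] //.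
  rewrite (inj_eq (@lift_inj _ ord0)) => /Hp.
  by rewrite !tnth_ctupS.
rewrite mulrSr mulrDl mul1r; apply: (le_trans (ler_normD _ _)); apply: lerD.
  apply: (le_trans (ler_norm_sum _ _ _)).
  apply: (@le_trans _ _ (\sum_a al a * (n%:R * dTV al al'))).
    apply: ler_sum => a _; rewrite normrM ger0_norm ?Ha.1 //.
    by apply: ler_wpM2l; [apply: Ha.1 | apply: IH].
  by rewrite -big_distrl /= Ha.2 mul1r.
apply: scal => // a b.
rewrite /G Ew_sub -(Ew_const Ha' n 1); apply: Ew_le => // t.
apply: (Hf _ _ ord0) => i.
case: (unliftP ord0 i) => [j ->|->] //.
by rewrite !tnth_ctupS.
Qed.

End Ana.
Lemma greene0 d n (w : n.-tuple 'I_d) : greene 0 w = 0%N.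
Proof. by apply/eqP; rewrite -leqn0; apply/bigmax_leqP => F _; rewrite big_ord0. Qed.

Lemma disj0l T (B : {set T}) : [disjoint set0 & B].
Proof. by rewrite disjoints_subset sub0set. Qed.
Lemma disj0r T (B : {set T}) : [disjoint B & set0].
Proof. by rewrite disjoints_subset setC0 subsetT. Qed.

Lemma greene_mono d n k (w : n.-tuple 'I_d) : (greene k w <= greene k.+1 w)%N.
Proof.
apply/bigmax_leqP => F /andP [/forallP Hinc /forallP Hdis].
pose G : {ffun 'I_k.+1 -> {set 'I_n}} :=
  [ffun i => if unlift ord0 i is Some j then F j else set0].
have HG : disj_incr_family w G.
  apply/andP; split.
    apply/forallP => i; rewrite ffunE; case: (unlift ord0 i) => [j|] //.
    by apply/forallP => x; rewrite in_set0.
  apply/forallP => i; apply/forallP => j; apply/implyP; rewrite !ffunE.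
  case: (unliftP ord0 i) => [i' ->|->]; rewrite ?liftK ?unlift_none ?disj0l //.
  case: (unliftP ord0 j) => [j' ->|->]; rewrite ?liftK ?unlift_none ?disj0r //.
  rewrite (inj_eq (@lift_inj _ ord0)) => ij.
  by have := Hdis i' => /forallP /(_ j') /implyP; apply.
apply: leq_trans (leq_bigmax_cond _ HG).
rewrite big_ord_recl ffunE unlift_none cards0 add0n.
by apply: eq_leq; apply: eq_bigr => i _; rewrite ffunE liftK.
Qed.

Lemma greene_lip d n k (w w' : n.-tuple 'I_d) (p : 'I_n) :
  (forall i, i != p -> tnth w i = tnth w' i) -> (greene k w <= (greene k w').+1)%N.
Proof.
move=> Hw; apply/bigmax_leqP => F /andP [/forallP Hinc /forallP Hdis].
pose F' : {ffun 'I_k -> {set 'I_n}} := [ffun i => F i :\ p].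
have HF' : disj_incr_family w' F'.
  apply/andP; split.
    apply/forallP => i; rewrite ffunE.
    apply/forallP => x; apply/implyP => /setD1P [xp xF].
    apply/forallP => y; apply/implyP => /setD1P [yp yF].
    rewrite -(Hw x xp) -(Hw y yp).
    by have := Hinc i => /forallP /(_ x) /implyP /(_ xF) /forallP /(_ y) /implyP /(_ yF).
  apply/forallP => i; apply/forallP => j; apply/implyP => ij; rewrite !ffunE.
  apply: (disjointW (subsetDl _ _) (subsetDl _ _)).
  by have := Hdis i => /forallP /(_ j) /implyP; apply.
have H1 : (\sum_(i < k) (p \in F i) <= 1)%N.
  case: (boolP [exists i, p \in F i]) => [/existsP [i0 Hi0]|/existsPn H].
    rewrite (bigD1 i0) //= Hi0 big1 // => j ji0.
    have := Hdis i0 => /forallP /(_ j) /implyP.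
    rewrite eq_sym ji0 => /(_ isT) D.
    by rewrite (disjointFr D Hi0).
  by rewrite big1 // => i _; rewrite (negbTE (H i)).
have E : (\sum_(i < k) #|F i| = \sum_(i < k) (p \in F i) + \sum_(i < k) #|F' i|)%N.
  by rewrite -big_split; apply: eq_bigr => i _; rewrite ffunE (cardsD1 p).
rewrite E addnC -addn1 leq_add //.
rewrite /greene; exact: (leq_bigmax_cond (P := fun F => disj_incr_family w' F) (F := fun F => \sum_(i < k) #|F i|) _ HF').
Qed.

Lemma sum_rows d n k (w : n.-tuple 'I_d) : (\sum_(1 <= j < k.+1) shRSK_row j w)%N = greene k w.
Proof.
elim: k => [|k IH]; first by rewrite big_geq // greene0.
rewrite big_nat_recr //= IH /shRSK_row /=; apply: subnKC; exact: greene_mono.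
Qed.

Lemma Ew_ext (R : realFieldType) d n (al : 'I_d -> R) (f g : n.-tuple 'I_d -> R) :
  (forall w, f w = g w) -> Ew al f = Ew al g.
Proof. by move=> H; apply: eq_bigr => w _; rewrite H. Qed.

Lemma Ew_div (R : realFieldType) d n (al : 'I_d -> R) (f : n.-tuple 'I_d -> R) c :
  Ew al (fun w => f w / c) = Ew al f / c.
Proof. by rewrite /Ew mulr_suml; apply: eq_bigr => w _; rewrite mulrA. Qed.

Lemma key (R : realFieldType) d n (al al' : 'I_d -> R) (Ha : is_distr al) (Ha' : is_distr al')
  (Hn : (1 <= n)%N) j :
  `| Ew al (fun w : n.-tuple 'I_d => (greene j w)%:R / n%:R)
     - Ew al' (fun w : n.-tuple 'I_d => (greene j w)%:R / n%:R) | <= dTV al al'.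
Proof.
have n0 : (0 : R) < n%:R by rewrite ltr0n.
rewrite !Ew_div -mulrBl normrM normfV (gtr0_norm n0) ler_pdivrMr // mulrC.
apply: Ew_lip => // w w' p Hp.
by rewrite lerBlDr addrC natr1 ler_nat; apply: greene_lip Hp.
Qed.

Theorem mainTheorem12 (R : realFieldType) (d n : nat) (alpha alpha' : 'I_d -> R)
  (Ha : is_distr alpha) (Ha' : is_distr alpha') (Hn : (1 <= n)%N)
  (k : nat) (Hk1 : (1 <= k)%N) (Hkd : (k <= d)%N) :
  `| Ew alpha (fun w : n.-tuple 'I_d => \sum_(1 <= j < k.+1) (shRSK_row j w)%:R / n%:R)
     - Ew alpha' (fun w : n.-tuple 'I_d => \sum_(1 <= j < k.+1) (shRSK_row j w)%:R / n%:R) |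
    <= dTV alpha alpha'
  /\
  `| Ew alpha (fun w : n.-tuple 'I_d => (shRSK_row k w)%:R / n%:R)
     - Ew alpha' (fun w : n.-tuple 'I_d => (shRSK_row k w)%:R / n%:R) |
    <= 2 * dTV alpha alpha'.
Proof.
have E1 al : Ew al (fun w : n.-tuple 'I_d => \sum_(1 <= j < k.+1) (shRSK_row j w)%:R / n%:R)
   = Ew al (fun w : n.-tuple 'I_d => (greene k w)%:R / n%:R).
  by apply: Ew_ext => w; rewrite -mulr_suml -natr_sum sum_rows.
split; first by rewrite !E1; apply: key.
case: k Hk1 Hkd {E1} => [//|k] _ _.
have E2 al : Ew al (fun w : n.-tuple 'I_d => (shRSK_row k.+1 w)%:R / n%:R)
   = Ew al (fun w : n.-tuple 'I_d => (greene k.+1 w)%:R / n%:R)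
     - Ew al (fun w : n.-tuple 'I_d => (greene k w)%:R / n%:R).
  by rewrite Ew_sub; apply: Ew_ext => w; rewrite /shRSK_row /= natrB ?greene_mono // mulrBl.
rewrite !E2.
set A := Ew alpha _; set B := Ew alpha _; set A' := Ew alpha' _; set B' := Ew alpha' _.
have -> : A - B - (A' - B') = (A - A') - (B - B') by rewrite opprB addrA; lra.
apply: (le_trans (ler_normB _ _)); rewrite mulr2n mulrDl mul1r.
by apply: lerD; apply: key.
Qed.
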